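(* Let $n\ge 1$ and let $d_1^+,\dots,d_n^+$ and $d_1^-,\dots,d_n^-$ be sequences of non-negative integers (in-degrees and out-degrees, respectively), and put $d_j=d_j^++d_j^-$. 1) Let $G$ be the random directed graph on $[n]$ given by the directed random configuration model with in-degrees $d_1^+,\dots,d_n^+$ and out-degrees $d_1^-,\dots,d_n^-$. Then for every $\varepsilon>0$, $$\mathbb{P}\big(|m(G)-\mathbb{E}(m(G))|>\varepsilon\big)\le 2\exp\Big\{-\frac{\varepsilon^2n^2}{8\sum_{k=1}^n d_k^2}\Big\}.$$ 2) Let $G$ be the random directed graph on $[n]$ given by the random configuration model with total degrees $d_1,\dots,d_n$ and independently uniformly oriented edges. Then for every $\varepsilon>0$, $$\mathbb{P}\big(|m(G)-\mathbb{E}(m(G))|>\varepsilon\big)\le 2\exp\Big\{-\frac{\varepsilon^2n^2}{32\sum_{k=1}^n d_k^2}\Big\}.$$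
   Context: Graphs may have multiple edges and loops. A directed matching of a directed graph $G$ is a set $M$ of edges such that every vertex has in-degree at most one and out-degree at most one in the subgraph formed by $M$. The directed matching ratio of a finite directed graph $G$ is $m(G)=|M_{\max}(G)|/|V(G)|$, where $M_{\max}(G)$ is a directed matching of maximum size. Directed configuration model with prescribed in/out-degrees: vertex $k\in[n]$ receives $d_k^-$ tail-type half-edges and $d_k^+$ head-type half-edges (assuming $\sum_k d_k^-=\sum_k d_k^+$); a uniformly random bijection between the set of tail-type half-edges and the set of head-type half-edges is chosen, and each matched pair (tail half-edge at $u$, head half-edge at $v$) gives a directed edge $(u,v)$. Configuration model with prescribed total degrees: vertex $k$ receives $d_k$ half-edges; if the total number of half-edges is odd, one uniformly chosen half-edge is discarded; a uniformly random perfect matching of the half-edges is chosen, each matched pair giving an edge; then each edge is given one of its two orientations uniformly at random, independently of the others. *)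

(* Defs.v *)
From HB Require Import structures.
From mathcomp Require Import all_boot all_order all_algebra.
From mathcomp Require Import reals sequences exp.
Set Implicit Arguments. Unset Strict Implicit. Unset Printing Implicit Defensive.
Import Order.TTheory GRing.Theory Num.Theory.
Local Open Scope ring_scope.

(* A directed multigraph on vertex set 'I_n: a finite type E of edge
   labels, a set Es of present edges, and source/target maps.
   Loops and multiple edges are allowed. *)
Definition dmatching (E : finType) (n : nat) (src dst : E -> 'I_n)
    (M : {set E}) : bool :=
  [forall v : 'I_n, (#|[set e in M | src e == v]| <= 1)%N
                  && (#|[set e in M | dst e == v]| <= 1)%N].

Definition max_dmatch (E : finType) (n : nat) (Es : {set E})
    (src dst : E -> 'I_n) : nat :=
  \max_(M : {set E} | (M \subset Es) && dmatching src dst M) #|M|.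

Definition match_ratio (R : realType) (E : finType) (n : nat) (Es : {set E})
    (src dst : E -> 'I_n) : R :=
  (max_dmatch Es src dst)%:R / n%:R.

Definition unif_prob (R : realType) (T : finType) (S : {set T}) (A : pred T) : R :=
  #|[set x in S | A x]|%:R / #|S|%:R.

Definition unif_exp (R : realType) (T : finType) (S : {set T}) (f : T -> R) : R :=
  (\sum_(x in S) f x) / #|S|%:R.

(* tail-type half-edges of vertex k: {k & 'I_(dm k)} (dm = out-degrees),
   head-type half-edges: {k & 'I_(dp k)} (dp = in-degrees).
   A configuration is a bijection tails -> heads (an injective finite
   function; bijective since the two sets have equal size). *)
Definition dcm_space (n : nat) (dp dm : 'I_n -> nat) :
    {set {ffun {k : 'I_n & 'I_(dm k)} -> {k : 'I_n & 'I_(dp k)}}} :=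
  [set s : {ffun {k : 'I_n & 'I_(dm k)} -> {k : 'I_n & 'I_(dp k)}}
       | injectiveb (fun t => s t)].

(* the edge indexed by tail half-edge t goes from (vertex of t) to
   (vertex of the head half-edge matched with t) *)
Definition dcm_ratio (R : realType) (n : nat) (dp dm : 'I_n -> nat)
    (s : {ffun {k : 'I_n & 'I_(dm k)} -> {k : 'I_n & 'I_(dp k)}}) : R :=
  match_ratio R setT (fun t => tag t) (fun t => tag (s t)).

(* An outcome is a pair (p, o):
   p is an involution of the half-edges with exactly (total mod 2) fixed
   points (the fixed point, if any, is the discarded half-edge; the other
   orbits {x, p x} are the edges of the uniform perfect matching);
   o : half-edge -> bool orients the edge {x, p x} from x to p x iff o x,
   with o (p x) = ~~ o x, and o = false on the discarded half-edge.
   The uniform distribution on such pairs is exactly the law of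
   (uniform discarded half-edge, uniform perfect matching,
    independent uniform orientations). *)
Definition cmo_space (n : nat) (d : 'I_n -> nat) :
    {set {ffun {k : 'I_n & 'I_(d k)} -> {k : 'I_n & 'I_(d k)}}
         * {ffun {k : 'I_n & 'I_(d k)} -> bool}} :=
  [set po : {ffun {k : 'I_n & 'I_(d k)} -> {k : 'I_n & 'I_(d k)}}
            * {ffun {k : 'I_n & 'I_(d k)} -> bool} | [&& [forall x, po.1 (po.1 x) == x],
                #|[set x | po.1 x == x]| == odd (\sum_k d k) &
                [forall x, if po.1 x == x then po.2 x == false
                           else po.2 (po.1 x) == ~~ po.2 x]]].

Definition cmo_ratio (R : realType) (n : nat) (d : 'I_n -> nat)
    (po : {ffun {k : 'I_n & 'I_(d k)} -> {k : 'I_n & 'I_(d k)}}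
          * {ffun {k : 'I_n & 'I_(d k)} -> bool}) : R :=
  match_ratio R [set x | (po.1 x != x) && po.2 x]
              (fun x => tag x) (fun x => tag (po.1 x)).

(* Main.v *)
Require Import Defs.
From HB Require Import structures.
From mathcomp Require Import all_boot all_order all_algebra.
From mathcomp Require Import reals sequences exp.
From mathcomp Require Import ring lra zify.
Set Implicit Arguments. Unset Strict Implicit. Unset Printing Implicit Defensive.
Import Order.TTheory GRing.Theory Num.Theory.
Local Open Scope ring_scope.

Section Analytic.
Variable R : realType.

Lemma expR_le_quad (x : R) : x <= 1/2 -> expR x <= 1 + x + 2 * x^+2.
Proof.
move=> hx.
have h := expR_ge1Dx (-x); rewrite expRN in h.
have e0 := expR_gt0 x.
have h1 : expR x * (1 - x) <= 1.
  have : (1 - x) * expR x <= (expR x)^-1 * expR x by rewrite ler_pM2r.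
  by rewrite mulVf ?gt_eqF // mulrC.
nra.
Qed.

Lemma hoeff (J : finType) (w y : J -> R) (c l : R) : 0 <= c ->
  (forall j, 0 <= w j) -> \sum_j w j * y j = 0 ->
  (forall j, 0 < w j -> `|y j| <= c) ->
  \sum_j w j * expR (l * y j) <= (\sum_j w j) * expR (2 * (l^+2 * c^+2)).
Proof.
move=> c0 w0 sw0 wy.
set t := `|l| * c.
have t0 : 0 <= t by rewrite /t mulr_ge0.
have tt : l^+2 * c^+2 = t^+2 by rewrite /t exprMn real_normK ?num_real.
rewrite tt.
have hly : forall j, 0 < w j -> `|l * y j| <= t.
  by move=> j /wy hj; rewrite normrM /t ler_wpM2l.
have [ht|ht] := lerP t (1/2).
- apply: (@le_trans _ _ (\sum_j (w j + l * (w j * y j) + 2 * t^+2 * w j))).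
    apply: ler_sum => j _.
    have [wj0|wjp] := eqVneq (w j) 0; first by rewrite wj0 !(mul0r, mulr0, addr0).
    have wjp' : 0 < w j by rewrite lt_def wjp w0.
    have hj := hly j wjp'.
    have hj2 : (l * y j) ^+ 2 <= t ^+ 2.
      by rewrite -real_normK ?num_real // lerXn2r ?nnegrE ?normr_ge0.
    have hj1 : l * y j <= 1/2.
      by apply: le_trans ht; apply: le_trans hj; apply: ler_norm.
    have := expR_le_quad hj1 => he.
    have : w j * expR (l * y j) <= w j * (1 + l * y j + 2 * (l * y j)^+2).
      by rewrite ler_wpM2l.
    nra.
  rewrite !big_split /= -mulr_sumr sw0 mulr0 addr0 -mulr_sumr mulrC.
  rewrite -{1}(mulr1 (\sum_j w j)) -mulrDr.
  apply: ler_wpM2l; first by apply: sumr_ge0.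
  by have := expR_ge1Dx (2 * t^+2); rewrite addrC.
- rewrite mulr_suml; apply: ler_sum => j _.
  have [wj0|wjp] := eqVneq (w j) 0; first by rewrite wj0 !mul0r.
  have wjp' : 0 < w j by rewrite lt_def wjp w0.
  apply: ler_wpM2l => //; rewrite ler_expR.
  apply: le_trans (ler_norm _) _; apply: le_trans (hly j wjp') _.
  nra.
Qed.

End Analytic.

Section Key.
Variable R : realType.

Definition meanA (U : finType) (A : {set U}) (f : U -> R) : R :=
  (\sum_(x in A) f x) / #|A|%:R.

Definition mgf_ok (U : finType) (A : {set U}) (f : U -> R) (V : R) :=
  forall l : R, \sum_(x in A) expR (l * (f x - meanA A f)) <= #|A|%:R * expR (l ^+ 2 * V).

Lemma card_mean (U : finType) (A : {set U}) (f : U -> R) :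
  #|A|%:R * meanA A f = \sum_(x in A) f x.
Proof.
rewrite /meanA; have [->|] := eqVneq A set0.
  by rewrite cards0 big_set0 mul0r.
rewrite -card_gt0 => h; rewrite mulrC -mulrA mulVf ?mulr1 //.
by rewrite pnatr_eq0 -lt0n.
Qed.

Lemma mgf_small (U : finType) (A : {set U}) (f : U -> R) V x0 :
  A \subset [set x0] -> 0 <= V -> mgf_ok A f V.
Proof.
move=> sA V0 l; have [inA|ninA] := boolP (x0 \in A).
  have eA : A = [set x0].
    by apply/eqP; rewrite eqEsubset sA sub1set inA.
  rewrite eA big_set1 cards1 /meanA big_set1 cards1 divr1 subrr mulr0 expR0 mul1r.
  by rewrite -expR0 ler_expR mulr_ge0 ?sqr_ge0.
have eA : A = set0.
  apply/setP => x; rewrite inE; apply/negbTE; apply/negP => xA.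
  by move: (subsetP sA x xA); rewrite inE => /eqP ex; rewrite -ex xA in ninA.
by rewrite eA big_set0 cards0 mul0r.
Qed.

Lemma mgf_mono (U : finType) (A : {set U}) (f : U -> R) V V' :
  mgf_ok A f V -> V <= V' -> mgf_ok A f V'.
Proof.
move=> h le l; apply: le_trans (h l) _; apply: ler_wpM2l => //.
by rewrite ler_expR; apply: ler_wpM2l => //; rewrite sqr_ge0.
Qed.

Lemma key (U J : finType) (A : {set U}) (g : U -> J) (f : U -> R) (V c : R) :
  0 <= c ->
  (forall j, mgf_ok [set x in A | g x == j] f V) ->
  (forall j j', [set x in A | g x == j] != set0 -> [set x in A | g x == j'] != set0 ->
     `|meanA [set x in A | g x == j] f - meanA [set x in A | g x == j'] f| <= c) ->
  mgf_ok A f (V + 2 * c ^+ 2).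
Proof.
move=> c0 hB hc l.
set B := fun j => [set x in A | g x == j].
set mu := meanA A f.
have part : forall F : U -> R, \sum_(x in A) F x = \sum_j \sum_(x in B j) F x.
  move=> F; rewrite (partition_big g xpredT) //=; apply: eq_bigr => j _.
  by apply: eq_bigl => x; rewrite /B inE.
have cardA : #|A|%:R = \sum_j (#|B j|%:R : R).
  rewrite -sum1_card natr_sum (part (fun _ => 1)); apply: eq_bigr => j _.
  by rewrite -sum1_card natr_sum.
have sumw : \sum_j #|B j|%:R * (meanA (B j) f - mu) = 0.
  under eq_bigr do rewrite mulrBr card_mean.
  by rewrite sumrB -part -mulr_suml -cardA /mu card_mean subrr.
have wy : forall j, 0 < (#|B j|%:R : R) -> `|meanA (B j) f - mu| <= c.
  move=> j; rewrite ltr0n card_gt0 => Bj0.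
  have A0 : (0 : R) < #|A|%:R.
    rewrite ltr0n card_gt0; apply: contraNneq Bj0 => eA.
    by apply/eqP/setP => x; rewrite /B !inE eA inE.
  have e : #|A|%:R * (meanA (B j) f - mu)
           = \sum_j' #|B j'|%:R * (meanA (B j) f - meanA (B j') f).
    under eq_bigr do rewrite mulrBr card_mean.
    by rewrite sumrB -part -mulr_suml -cardA /mu mulrBr !card_mean.
  have : `|#|A|%:R * (meanA (B j) f - mu)| <= #|A|%:R * c.
    rewrite e cardA mulr_suml; apply: le_trans (ler_norm_sum _ _ _) _.
    apply: ler_sum => j' _; rewrite normrM ger0_norm ?ler0n //.
    have [e0|ne0] := eqVneq #|B j'| 0%N; first by rewrite e0 !mul0r.
    apply: ler_wpM2l => //; apply: hc => //.
    by rewrite -card_gt0 lt0n.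
  by rewrite normrM ger0_norm ?ler0n // ler_pM2l.
have step : forall j, \sum_(x in B j) expR (l * (f x - mu))
     <= #|B j|%:R * expR (l * (meanA (B j) f - mu)) * expR (l ^+ 2 * V).
  move=> j.
  have -> : \sum_(x in B j) expR (l * (f x - mu)) =
     expR (l * (meanA (B j) f - mu)) * \sum_(x in B j) expR (l * (f x - meanA (B j) f)).
    rewrite mulr_sumr; apply: eq_bigr => x _; rewrite -expRD; congr expR; ring.
  rewrite [#|B j|%:R * _]mulrC -mulrA; apply: ler_wpM2l; first exact: expR_ge0.
  exact: hB j l.
rewrite part; apply: le_trans (ler_sum _ (fun j _ => step j)) _.
rewrite -mulr_suml mulrDr expRD mulrA mulrC [_ * expR (l ^+ 2 * V)]mulrC.
rewrite -[X in _ <= X]mulrA; apply: ler_wpM2l; first exact: expR_ge0.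
rewrite cardA [l ^+ 2 * (2 * _)]mulrCA.
by apply: hoeff => // j; rewrite ler0n.
Qed.

End Key.

Section Chern.
Variable R : realType.

Lemma one_tail (U : finType) (A : {set U}) (f : U -> R) V eps (s : R) :
  mgf_ok A f V -> 0 < V -> 0 < eps -> s ^+ 2 = 1 ->
  #|[set x in A | eps < s * (f x - meanA A f)]|%:R
     <= #|A|%:R * expR (- (eps ^+ 2 / (4 * V))).
Proof.
move=> h V0 e0 s2.
set l := eps / (2 * V).
have l0 : 0 < l by rewrite /l divr_gt0 // mulr_gt0.
have := h (s * l); rewrite exprMn s2 mul1r => hl.
set P := [set x in A | _].
have e1 : #|P|%:R * expR (l * eps) <= \sum_(x in A) expR (s * l * (f x - meanA A f)).
  rewrite (bigID (fun x => eps < s * (f x - meanA A f))) /=.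
  set S2 := (X in _ <= _ + X).
  have S20 : 0 <= S2 by apply: sumr_ge0 => x _; apply: expR_ge0.
  set S1 := (X in _ <= X + _).
  suff hh : #|P|%:R * expR (l * eps) <= S1 by lra.
  rewrite /S1 mulr_natl -sumr_const.
  rewrite [X in _ <= X](eq_bigl (fun x => x \in P)); last by move=> x; rewrite /P inE.
  apply: ler_sum => x; rewrite /P inE => /andP [_ hx]; rewrite ler_expR -mulrA.
  by rewrite mulrCA ler_pM2l // ltW.
have e2 := le_trans e1 hl.
have ee : expR (- (eps ^+ 2 / (4 * V))) = expR (l ^+ 2 * V) / expR (l * eps).
  rewrite -expRB; congr expR; rewrite /l; field; lra.
rewrite ee mulrA ler_pdivlMr ?expR_gt0 //.
Qed.

Lemma chernoff2 (U : finType) (A : {set U}) (f : U -> R) V eps :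
  mgf_ok A f V -> 0 < V -> 0 < eps ->
  unif_prob R A (fun x => eps < `|f x - unif_exp A f|)
     <= 2 * expR (- (eps ^+ 2 / (4 * V))).
Proof.
move=> h V0 e0; rewrite /unif_prob /unif_exp -/(meanA A f).
have [A0|An0] := eqVneq #|A| 0%N.
  by rewrite A0 invr0 mulr0 mulr_ge0 ?expR_ge0.
have Ap : (0 : R) < #|A|%:R by rewrite ltr0n lt0n.
Show.
suff hh : #|[set x in A | eps < `|f x - meanA A f|]|%:R <= 2 * expR (- (eps ^+ 2 / (4 * V))) * #|A|%:R.
  by rewrite -(ler_pdivrMr _ _ Ap) in hh; exact: hh.
rewrite [_ * #|A|%:R]mulrC mulrA [_ * 2]mulrC -mulrA mulr2n mulrDl.
set P1 := [set x in A | eps < 1 * (f x - meanA A f)].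
set P2 := [set x in A | eps < (-1) * (f x - meanA A f)].
have sub : [set x in A | eps < `|f x - meanA A f|] \subset P1 :|: P2.
  apply/subsetP => x; rewrite !inE ltr_normr mul1r mulN1r.
  by case/andP => -> /orP [] ->; rewrite ?orbT.
apply: le_trans (_ : #|P1 :|: P2|%:R <= _).
  by rewrite ler_nat subset_leq_card.
apply: le_trans (_ : (#|P1| + #|P2|)%:R <= _).
  by rewrite ler_nat cardsU leq_subr.
rewrite natrD mul1r; apply: lerD; apply: one_tail => //.
  by rewrite expr1n.
by rewrite sqrrN expr1n.
Qed.

Lemma mean_invol (U : finType) (A B : {set U}) (phi : U -> U) (f : U -> R) c :
  0 <= c ->
  (forall x, x \in A -> phi x \in B) -> (forall x, x \in B -> phi x \in A) ->
  (forall x, phi (phi x) = x) -> (forall x, x \in A -> `|f (phi x) - f x| <= c) ->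
  `|meanA A f - meanA B f| <= c.
Proof.
move=> c0 hAB hBA inv hc.
have eB : B = phi @: A.
  apply/setP => y; apply/idP/imsetP.
    by move=> yB; exists (phi y); [apply: hBA | rewrite inv].
  by case=> x xA ->; apply: hAB.
have injphi : injective phi by apply: (can_inj inv).
rewrite eB /meanA card_imset // big_imset /=; last by move=> x y _ _; apply: injphi.
have [A0|An0] := eqVneq #|A| 0%N.
  by rewrite A0 invr0 !mulr0 subrr normr0.
have Ap : (0 : R) < #|A|%:R by rewrite ltr0n lt0n.
rewrite -mulrBl -sumrB normrM [`|_^-1|]ger0_norm ?invr_ge0 ?ler0n // ler_pdivrMr //.
apply: le_trans (ler_norm_sum _ _ _) _.
rewrite mulr_natr -sumr_const.
by apply: ler_sum => x xA; rewrite distrC hc.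
Qed.

End Chern.

Definition sw (T : eqType) (u v x : T) := if x == u then v else if x == v then u else x.

Lemma swK (T : eqType) (u v : T) : involutive (sw u v).
Proof.
move=> x; rewrite /sw.
case: (eqVneq x u) => [->|xu]; first by rewrite eqxx; case: eqVneq => // ->.
case: (eqVneq x v) => [->|xv]; first by rewrite eqxx.
by rewrite (negbTE xu) (negbTE xv).
Qed.

Lemma sw_inj (T : eqType) (u v : T) : injective (sw u v).
Proof. exact: can_inj (swK u v). Qed.

Lemma dmatching_sub (E : finType) n (src dst dst' : E -> 'I_n) (M M' : {set E}) :
  dmatching src dst M -> M' \subset M -> (forall e, e \in M' -> dst' e = dst e) ->
  dmatching src dst' M'.
Proof.
move=> /forallP hM sMM' hd; apply/forallP => v; have /andP [h1 h2] := hM v.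
apply/andP; split.
  apply: leq_trans h1; apply: subset_leq_card; apply/subsetP => e.
  by rewrite !inE => /andP [eM ->]; rewrite (subsetP sMM' _ eM).
apply: leq_trans h2; apply: subset_leq_card; apply/subsetP => e.
by rewrite !inE => /andP [eM]; rewrite hd // => ->; rewrite (subsetP sMM' _ eM).
Qed.

Lemma max_dmatch_le (E : finType) n (Es Es' : {set E}) (src dst dst' : E -> 'I_n) (k : nat) :
  (forall M : {set E}, M \subset Es -> dmatching src dst M ->
     exists M' : {set E}, [/\ M' \subset Es', dmatching src dst' M' & (#|M| <= #|M'| + k)%N]) ->
  (max_dmatch Es src dst <= max_dmatch Es' src dst' + k)%N.
Proof.
move=> h; apply/bigmax_leqP => M /andP [sM mM].
have [M' [sM' mM' le]] := h M sM mM.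
apply: leq_trans le _; rewrite leq_add2r.
rewrite /max_dmatch.
by apply: (@leq_bigmax_cond _ (fun M : {set E} => (M \subset Es') && dmatching src dst' M) (fun M : {set E} => #|M|)); rewrite sM'.
Qed.

Lemma md_restrict (E : finType) n (Es Es' : {set E}) (src dst dst' : E -> 'I_n) (S : {set E}) (k : nat) :
  (forall e, e \notin S -> ((e \in Es) = (e \in Es')) /\ dst e = dst' e) ->
  (#|Es :&: S| <= k)%N ->
  (max_dmatch Es src dst <= max_dmatch Es' src dst' + k)%N.
Proof.
move=> hS hk; apply: max_dmatch_le => M sM mM.
exists (M :\: S); split.
- apply/subsetP => e; rewrite inE => /andP [eS eM].
  by have [<- _] := hS e eS; apply: (subsetP sM).
- apply: dmatching_sub mM _ _; first exact: subsetDl.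
  by move=> e; rewrite inE => /andP [eS _]; have [_ ->] := hS e eS.
- rewrite -(cardsID S M) addnC leq_add2l; apply: leq_trans hk.
  by apply: subset_leq_card; apply: setSI.
Qed.

Lemma md_swap (T H : finType) n (tagH : H -> 'I_n) (src : T -> 'I_n) (s s' : T -> H) (b b' : H) :
  (forall t, s' t = sw b b' (s t)) ->
  (max_dmatch setT src (fun t => tagH (s t)) <= max_dmatch setT src (fun t => tagH (s' t)) + 1)%N.
Proof.
move=> hs; apply: max_dmatch_le => M _ mM.
have uniq : forall e1 e2, e1 \in M -> e2 \in M -> s e1 = s e2 -> e1 = e2.
  move=> e1 e2 e1M e2M se.
  have /forallP /(_ (tagH (s e1))) /andP [_ h] := mM.
  have /card_le1_eqP hh := h.
  by apply: (hh e2 e1); rewrite inE ?e1M ?e2M ?se eqxx.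
have [t1 /andP [t1M st1] | nb] := pickP [pred t | (t \in M) && (s t == b)] ; last first.
  exists [set e in M | s e != b']; split.
  - exact: subsetT.
  - apply: dmatching_sub mM _ _; first by apply/subsetP => e; rewrite inE => /andP [].
    move=> e; rewrite inE => /andP [eM sb']; rewrite hs /sw (negbTE sb').
    by have := nb e; rewrite /= eM /= => ->.
  - have -> : [set e in M | s e != b'] = M :\: [set e | s e == b'].
      by apply/setP => e; rewrite !inE andbC.
    rewrite -(cardsID [set e | s e == b'] M) addnC leq_add2l.
    apply/card_le1_eqP => x y; rewrite !inE => /andP [xM /eqP sx] /andP [yM /eqP sy].
    by apply: uniq => //; rewrite sx sy.
have [t2 /andP [t2M st2] | nb] := pickP [pred t | (t \in M) && (s t == b')] ; last first.
  exists [set e in M | s e != b]; split.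
  - exact: subsetT.
  - apply: dmatching_sub mM _ _; first by apply/subsetP => e; rewrite inE => /andP [].
    move=> e; rewrite inE => /andP [eM sb]; rewrite hs /sw (negbTE sb).
    by have := nb e; rewrite /= eM /= => ->.
  - have -> : [set e in M | s e != b] = M :\: [set e | s e == b].
      by apply/setP => e; rewrite !inE andbC.
    rewrite -(cardsID [set e | s e == b] M) addnC leq_add2l.
    apply/card_le1_eqP => x y; rewrite !inE => /andP [xM /eqP sx] /andP [yM /eqP sy].
    by apply: uniq => //; rewrite sx sy.
move/eqP: st1 => st1; move/eqP: st2 => st2.
exists M; split; [exact: subsetT | | by rewrite addn1].
apply/forallP => v; have /forallP/(_ v)/andP[h1 h2] := mM; rewrite h1 /=.
have -> : [set e in M | tagH (s' e) == v] = sw t1 t2 @^-1: [set e in M | tagH (s e) == v].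
  apply/setP => e; rewrite !inE hs.
  case: (eqVneq e t1) => [->|ne1].
    by rewrite /sw st1 !eqxx t1M t2M st2.
  case: (eqVneq e t2) ne1 => [-> ne1|ne2 ne1].
    rewrite [in RHS]/sw eqxx (negbTE (ne1 : t2 != t1)) t1M t2M st2 /sw eqxx.
    case: (eqVneq b' b) => [ebb|nbb]; last by rewrite st1.
    by move: ne1; rewrite (uniq t2 t1) ?eqxx // st1 st2 ebb.
  rewrite {2 3}/sw (negbTE ne1) (negbTE ne2).
  case eM: (e \in M) => //=.
  have sb : s e != b by apply/eqP => h; move: ne1; rewrite (uniq e t1) ?eqxx // st1 h.
  have sb' : s e != b' by apply/eqP => h; move: ne2; rewrite (uniq e t2) ?eqxx // st2 h.
  by rewrite /sw (negbTE sb) (negbTE sb').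
by rewrite card_preimset //; exact: sw_inj.
Qed.

Lemma ratio_lip (R : realType) (n x y k : nat) : (0 < n)%N ->
  (x <= y + k)%N -> (y <= x + k)%N ->
  `|x%:R / n%:R - y%:R / n%:R| <= k%:R / (n%:R : R).
Proof.
move=> n0 h1 h2.
have np : (0 : R) < n%:R by rewrite ltr0n.
rewrite -mulrBl normrM [`|_^-1|]ger0_norm ?invr_ge0 ?ler0n //.
rewrite ler_pM2r ?invr_gt0 //.
have h1' : (x%:R : R) <= y%:R + k%:R by rewrite -natrD ler_nat.
have h2' : (y%:R : R) <= x%:R + k%:R by rewrite -natrD ler_nat.
rewrite ler_norml; apply/andP; split; lra.
Qed.

Lemma prob_le1 (R : realType) (T : finType) (S : {set T}) (P : pred T) :
  unif_prob R S P <= 1.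
Proof.
rewrite /unif_prob; have [S0|Sn0] := eqVneq #|S| 0%N.
  by rewrite S0 invr0 mulr0.
rewrite ler_pdivrMr ?ltr0n ?lt0n // mul1r ler_nat.
by apply: subset_leq_card; apply/subsetP => x; rewrite inE => /andP [].
Qed.

Section Part1.
Variable R : realType.
Variables (n : nat) (dp dm : 'I_n -> nat).
Hypothesis n0 : (0 < n)%N.

Local Notation T := {k : 'I_n & 'I_(dm k)}.
Local Notation H := {k : 'I_n & 'I_(dp k)}.
Local Notation U := {ffun T -> H}.
Local Notation f := (@dcm_ratio R n dp dm).

Definition Om1 (F : {set T}) (s0 : U) : {set U} :=
  locked [set s in dcm_space dp dm | [forall t, (t \notin F) ==> (s t == s0 t)]].

Lemma Om1P (F : {set T}) (s0 s : U) : reflect [/\ injective s & forall t, t \notin F -> s t = s0 t] (s \in Om1 F s0).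
Proof.
rewrite /Om1 -lock /dcm_space !inE; apply: (iffP andP).
  by case=> /injectiveP hi /forallP h; split => // t tF; apply/eqP; move: (h t); rewrite tF.
by case=> hi h; split; [apply/injectiveP | apply/forallP => t; apply/implyP => tF; rewrite h].
Qed.

Definition phi1 (b b' : H) (s : U) : U := [ffun t => sw b b' (s t)].

Lemma phi1K (b b' : H) : involutive (phi1 b b').
Proof. move=> s; apply/ffunP => t; rewrite !ffunE; exact: swK. Qed.

Lemma f_phi1 (b b' : H) (s : U) : `|f (phi1 b b' s) - f s| <= 1%:R / n%:R.
Proof.
rewrite /dcm_ratio /match_ratio distrC; apply: ratio_lip => //.
  by apply: md_swap => t; rewrite ffunE.
by apply: md_swap => t; rewrite ffunE; exact: (esym (swK _ _ _)).
Qed.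

Lemma phi1_in (F : {set T}) (s0 : U) (a : T) (b b' : H) (s sb sb' : U) :
  a \in F -> sb \in Om1 F s0 -> sb a = b -> sb' \in Om1 F s0 -> sb' a = b' ->
  s \in Om1 F s0 -> phi1 b b' s \in Om1 F s0.
Proof.
move=> aF /Om1P [ib hb] eb /Om1P [ib' hb'] eb' /Om1P [si hs]; apply/Om1P; split.
  by move=> x y; rewrite !ffunE => /sw_inj /si.
move=> t tF; rewrite ffunE hs // /sw.
have ta : t != a by apply: contraNneq tF => ->.
have -> : (s0 t == b) = false.
  by apply/negbTE; rewrite -hb // -eb; apply/eqP => /ib /eqP; rewrite (negbTE ta).
have -> : (s0 t == b') = false.
  by apply/negbTE; rewrite -hb' // -eb'; apply/eqP => /ib' /eqP; rewrite (negbTE ta).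
by [].
Qed.

Lemma part1_mgf m : forall (F : {set T}) (s0 : U), (#|F| <= m)%N ->
  mgf_ok (Om1 F s0) f (#|F|%:R * (2 * (n%:R^-1) ^+ 2)).
Proof.
elim: m => [|m IH] F s0 hF.
  have F0 : F = set0 by apply/eqP; rewrite -cards_eq0 -leqn0.
  apply: (@mgf_small _ _ _ _ _ s0); last by rewrite F0 cards0 mul0r.
  apply/subsetP => s /Om1P [_ h]; rewrite inE; apply/eqP/ffunP => t.
  by apply: h; rewrite F0 inE.
have [F0|/set0Pn [a aF]] := eqVneq F set0.
  apply: (@mgf_small _ _ _ _ _ s0); last by rewrite F0 cards0 mul0r.
  apply/subsetP => s /Om1P [_ h]; rewrite inE; apply/eqP/ffunP => t.
  by apply: h; rewrite F0 inE.
have cF : #|F| = (#|F :\ a|).+1 by rewrite (cardsD1 a F) aF.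
have -> : (#|F|%:R : R) * (2 * n%:R^-1 ^+ 2) = #|F :\ a|%:R * (2 * n%:R^-1 ^+ 2) + 2 * (n%:R^-1) ^+ 2.
  by rewrite cF -addn1 natrD mulrDl mul1r.
apply: (@key _ _ _ _ (fun s : U => s a)).
- by rewrite invr_ge0 ler0n.
- move=> b; have [e0|/set0Pn [s1]] := eqVneq [set s in Om1 F s0 | s a == b] set0.
    rewrite e0; apply: (@mgf_small _ _ _ _ _ s0); first exact: sub0set.
    by rewrite mulr_ge0 ?ler0n // mulr_ge0 // exprn_ge0 // invr_ge0 ler0n.
  rewrite inE => /andP [s1in /eqP s1a].
  have -> : [set s in Om1 F s0 | s a == b] = Om1 (F :\ a) s1.
    move: (s1in) => /Om1P [i1 h1].
    apply/setP => s; rewrite inE; apply/andP/Om1P.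
      case=> /Om1P [si hs] /eqP sa; split => // t; rewrite !inE negb_and negbK.
      case: (eqVneq t a) => [-> _|ta] /=; first by rewrite sa s1a.
      by move=> tF; rewrite hs // h1.
    case=> si hs; split.
      apply/Om1P; split => // t tF; rewrite hs ?h1 //.
      by rewrite !inE negb_and tF orbT.
    by rewrite hs ?s1a // !inE eqxx.
  by apply: IH; rewrite -ltnS -cF.
- move=> b b' /set0Pn [sb] sbin /set0Pn [sb'] sb'in.
  move: sbin sb'in; rewrite !inE => /andP [sbin /eqP sba] /andP [sb'in /eqP sb'a].
  apply: (@mean_invol _ _ _ _ (phi1 b b')).
  + by rewrite invr_ge0 ler0n.
  + move=> s; rewrite !inE => /andP [sin /eqP sa]; rewrite (phi1_in aF sbin sba sb'in sb'a sin) /=.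
    by rewrite ffunE sa /sw eqxx.
  + move=> s; rewrite !inE => /andP [sin /eqP sa]; rewrite (phi1_in aF sbin sba sb'in sb'a sin) /=.
    rewrite ffunE sa /sw eqxx; by case: (eqVneq b' b) => [->|_] /=; rewrite ?eqxx.
  + exact: phi1K.
  + by move=> s _; rewrite -[n%:R^-1]mul1r; apply: f_phi1.
Qed.

Lemma part1_final (eps : R) : 0 < eps ->
  unif_prob R (dcm_space dp dm)
       (fun s => eps < `| f s - unif_exp (dcm_space dp dm) f |)
     <= 2 * expR (- (eps ^+ 2 * n%:R ^+ 2)
                  / (8 * (\sum_k (dp k + dm k) ^ 2)%N%:R)).
Proof.
move=> e0.
set S := (\sum_k (dp k + dm k) ^ 2)%N.
have [S0|Sn0] := eqVneq S 0%N.
  rewrite S0 mulr0 invr0 mulr0 expR0 mulr1; apply: le_trans (prob_le1 _ _ _) _; lra.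
have [E0|/set0Pn [s0 s0in]] := eqVneq (dcm_space dp dm) set0.
  by rewrite /unif_prob E0 cards0 invr0 mulr0 mulr_ge0 ?expR_ge0.
have eO : dcm_space dp dm = Om1 setT s0.
  apply/setP => s; apply/idP/Om1P.
    by rewrite /dcm_space inE => /injectiveP si; split => // t; rewrite inE.
  by case=> si _; rewrite /dcm_space inE; apply/injectiveP.
have np : (0 : R) < n%:R by rewrite ltr0n.
have Sp : (0 : R) < S%:R by rewrite ltr0n lt0n.
have hm := @part1_mgf #|[set: T]| setT s0 (leqnn _).
have hm' := mgf_mono hm (_ : _ <= S%:R * (2 * n%:R^-1 ^+ 2)).
rewrite eO.
have -> : - (eps ^+ 2 * n%:R ^+ 2) / (8 * S%:R) = - (eps ^+ 2 / (4 * (S%:R * (2 * n%:R^-1 ^+ 2)))).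
  field; apply/andP; split; apply/negP => /eqP; lra.
apply: chernoff2; last exact: e0.
  apply: hm'; apply: ler_wpM2r; first by rewrite mulr_ge0 // exprn_ge0 // invr_ge0 ler0n.
  rewrite ler_nat cardsT card_tagged sumnE big_map big_enum /=.
  apply: leq_sum => i _; rewrite card_ord; nia.
by rewrite mulr_gt0 // mulr_gt0 // exprn_gt0 // invr_gt0.
Qed.

End Part1.

Lemma sw_eq (T : eqType) (u v a q : T) : (sw u v a == q) = (a == sw u v q).
Proof.
apply/eqP/eqP => [<-|->]; last exact: swK.
by rewrite swK.
Qed.

Lemma swC (T : eqType) (u v q : T) : sw u v q = sw v u q.
Proof.
rewrite /sw; case: (eqVneq q u) => [qu|qu]; case: (eqVneq q v) => [qv|qv] //.
by rewrite -qv qu.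
Qed.

Lemma sw_id (T : eqType) (u v q : T) : q != u -> q != v -> sw u v q = q.
Proof. by rewrite /sw => /negbTE -> /negbTE ->. Qed.

Lemma swL (T : eqType) (u v : T) : sw u v u = v.
Proof. by rewrite /sw eqxx. Qed.

Lemma swR (T : eqType) (u v : T) : sw u v v = u.
Proof. by rewrite /sw eqxx; case: eqVneq => // ->. Qed.

Section Part2.
Variable R : realType.
Variables (n : nat) (d : 'I_n -> nat).
Hypothesis n0 : (0 < n)%N.

Local Notation X := {k : 'I_n & 'I_(d k)}.
Local Notation U := ({ffun X -> X} * {ffun X -> bool})%type.
Local Notation C := (cmo_space d).
Local Notation f := (@cmo_ratio R n d).

Definition fixset (po : U) : {set X} := [set q | po.1 q == q].

Lemma cmoP (po : U) : reflect [/\ forall q, po.1 (po.1 q) = q,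
   #|fixset po| = odd (\sum_k d k) &
   forall q, if po.1 q == q then po.2 q = false else po.2 (po.1 q) = ~~ po.2 q] (po \in C).
Proof.
rewrite /cmo_space inE; apply: (iffP and3P).
  case=> /forallP h1 /eqP h2 /forallP h3; split => //.
    by move=> q; apply/eqP.
  by move=> q; have := h3 q; case: ifP => _ /eqP.
case=> h1 h2 h3; split.
- by apply/forallP => q; rewrite h1.
- by apply/eqP.
- by apply/forallP => q; have := h3 q; case: ifP => _ ->.
Qed.

Definition mx (po : U) := max_dmatch [set x | (po.1 x != x) && po.2 x]
   (fun x => tag x) (fun x => tag (po.1 x)).

Lemma fE (po : U) : f po = (mx po)%:R / n%:R.
Proof. by []. Qed.

Definition cj (u v : X) (po : U) : U :=
  ([ffun q => sw u v (po.1 (sw u v q))], [ffun q => po.2 (sw u v q)]).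

Definition fl (x : X) (po : U) : U :=
  (po.1, [ffun q => if (q == x) || (q == po.1 x) then ~~ po.2 q else po.2 q]).

Lemma cjK u v : involutive (cj u v).
Proof.
case=> p o; rewrite /cj /=; congr pair; apply/ffunP => q; rewrite !ffunE !swK //.
Qed.

Lemma flK x : involutive (fl x).
Proof.
case=> p o; rewrite /fl /=; congr pair; apply/ffunP => q; rewrite !ffunE.
by case: ((q == x) || (q == p x)) => //=; rewrite negbK.
Qed.

Lemma fix_cj u v po : fixset (cj u v po) = sw u v @^-1: fixset po.
Proof. by apply/setP => q; rewrite !inE ffunE sw_eq. Qed.

Lemma cj_C u v po : po \in C -> cj u v po \in C.
Proof.
case/cmoP => h1 h2 h3; apply/cmoP; split.
- by move=> q; rewrite /cj /= !ffunE swK h1 swK.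
- by rewrite fix_cj card_preimset //; apply: sw_inj.
- move=> q; rewrite /cj /= !ffunE sw_eq.
  have := h3 (sw u v q); case: ifP => _ //.
  by rewrite swK.
Qed.

Lemma fl_C x po : po \in C -> po.1 x != x -> fl x po \in C.
Proof.
case/cmoP => h1 h2 h3 px; apply/cmoP; split => //.
move=> q; rewrite /fl /= !ffunE.
have pinj : injective po.1 by apply: (can_inj h1).
have := h3 q; case: ifP => [/eqP pq|pq].
  have qx : (q == x) = false by apply/negbTE; apply: contra_neq px => e; rewrite -e.
  have qpx : (q == po.1 x) = false.
    by apply/negbTE; apply: contra_neq px => e; rewrite -e -{1}pq e h1.
  by rewrite qx qpx.
have -> : (po.1 q == x) || (po.1 q == po.1 x) = (q == x) || (q == po.1 x).
  rewrite orbC; congr orb; first by rewrite (inj_eq pinj).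
  by apply/eqP/eqP => [<-|->]; rewrite h1.
by case: ifP => _ ->.
Qed.

Lemma L_flip (po : U) (x : X) : po \in C -> po.1 x != x -> (mx po <= mx (fl x po) + 1)%N.
Proof.
move=> /cmoP [h1 h2 h3] px; apply: (@md_restrict _ _ _ _ _ _ _ [set x; po.1 x]).
  move=> e; rewrite !inE negb_or => /andP [ex epx]; rewrite /fl /= ffunE (negbTE ex) (negbTE epx).
  by [].
apply: leq_trans (subset_leq_card (_ : _ \subset [set (if po.2 x then x else po.1 x)])) _; last by rewrite cards1.
apply/subsetP => e; rewrite !inE => /andP [/andP [pe oe] /orP [/eqP ee|/eqP ee]]; subst e.
  by rewrite oe eqxx.
have := h3 x; rewrite (negbTE px) /= oe => /esym/negbTE ->.
by rewrite eqxx.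
Qed.

Lemma L_cj_pair (po : U) (x y' : X) : po \in C -> po.1 x != x -> y' != x -> y' != po.1 x ->
  po.1 y' != y' -> (mx po <= mx (cj (po.1 x) y' po) + 2)%N.
Proof.
move=> /cmoP [h1 h2 h3] px y'x y'y py'.
apply: (@md_restrict _ _ _ _ _ _ _ [set x; po.1 x; y'; po.1 y']).
  move=> e; rewrite !inE !negb_or => /andP [/andP [/andP [ex ey] ey'] ew].
  have pey : po.1 e != po.1 x by apply: contra_neq ex => h; rewrite -[e]h1 h h1.
  have pey' : po.1 e != y' by apply: contra_neq ew => h; rewrite -h h1.
  by rewrite /cj /= !ffunE !(sw_id ey ey') !(sw_id pey pey').
set a := if po.2 x then x else po.1 x.
set b := if po.2 y' then y' else po.1 y'.
apply: leq_trans (subset_leq_card (_ : _ \subset [set a; b])) _; last by rewrite cards2; case: (a != b).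
apply/subsetP => e; rewrite !inE => /andP [/andP [pe oe]].
case/orP => [/orP [/orP [/eqP ee|/eqP ee]|/eqP ee]|/eqP ee]; subst e.
- by rewrite /a oe eqxx.
- have := h3 x; rewrite (negbTE px) /= oe => /esym/negbTE ox.
  by rewrite /a ox eqxx.
- by rewrite /b oe eqxx orbT.
- have := h3 y'; rewrite (negbTE py') /= oe => /esym/negbTE oy.
  by rewrite /b oy eqxx orbT.
Qed.

Lemma L_cj_disc (po : U) (z z' : X) : po \in C -> po.1 z = z -> z' != z -> po.1 z' != z' ->
  (mx po <= mx (cj z z' po) + 1)%N.
Proof.
move=> /cmoP [h1 h2 h3] pz z'z pz'.
apply: (@md_restrict _ _ _ _ _ _ _ [set z; z'; po.1 z']).
  move=> e; rewrite !inE !negb_or => /andP [/andP [ez ez'] ew].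
  have pez : po.1 e != z by apply: contra_neq ez => h; rewrite -[e]h1 h pz.
  have pez' : po.1 e != z' by apply: contra_neq ew => h; rewrite -h h1.
  by rewrite /cj /= !ffunE !(sw_id ez ez') !(sw_id pez pez').
set b := if po.2 z' then z' else po.1 z'.
apply: leq_trans (subset_leq_card (_ : _ \subset [set b])) _; last by rewrite cards1.
apply/subsetP => e; rewrite !inE => /andP [/andP [pe oe]].
case/orP => [/orP [/eqP ee|/eqP ee]|/eqP ee]; subst e.
- by rewrite pz eqxx in pe.
- by rewrite /b oe eqxx.
- have := h3 z'; rewrite (negbTE pz') /= oe => /esym/negbTE oy.
  by rewrite /b oy eqxx.
Qed.

Definition Om2 (F : {set X}) (p0 : {ffun X -> X}) (o0 : {ffun X -> bool}) : {set U} :=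
  locked [set po in C | [forall q, (q \notin F) ==> (po.1 q == p0 q) && (po.2 q == o0 q)]].

Lemma Om2P (F : {set X}) (p0 : {ffun X -> X}) (o0 : {ffun X -> bool}) (po : U) : reflect [/\ po \in C, forall q, q \notin F -> po.1 q = p0 q
   & forall q, q \notin F -> po.2 q = o0 q] (po \in Om2 F p0 o0).
Proof.
rewrite /Om2 -lock; apply: (iffP setIdP).
  case=> hC /forallP h; split => // q qF; have := h q; rewrite qF /= => /andP [/eqP ? /eqP ?] //.
case=> hC h1 h2; split => //; apply/forallP => q; apply/implyP => qF.
by rewrite h1 // h2 // !eqxx.
Qed.

Lemma Om2_C (F : {set X}) (p0 : {ffun X -> X}) (o0 : {ffun X -> bool}) (po : U) : po \in Om2 F p0 o0 -> po \in C.
Proof. by case/Om2P. Qed.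

Lemma in_F (F : {set X}) (p0 : {ffun X -> X}) (o0 : {ffun X -> bool}) (po : U) (x : X) : (forall q, q \notin F -> p0 q \notin F) ->
  po \in Om2 F p0 o0 -> x \in F -> po.1 x \in F.
Proof.
move=> hcl /Om2P [/cmoP [h1 _ _] hp _] xF; apply/negPn/negP => yF.
by have := hcl _ yF; rewrite -hp // h1 xF.
Qed.

Lemma cj_Om2 (F : {set X}) (p0 : {ffun X -> X}) (o0 : {ffun X -> bool}) (po : U) (u v : X) : (forall q, q \notin F -> p0 q \notin F) ->
  u \in F -> v \in F -> po \in Om2 F p0 o0 -> cj u v po \in Om2 F p0 o0.
Proof.
move=> hcl uF vF /Om2P [hC hp ho]; apply/Om2P; split; first exact: cj_C.
  move=> q qF.
  have qu : q != u by apply: contraNneq qF => ->.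
  have qv : q != v by apply: contraNneq qF => ->.
  have pF := hcl q qF.
  have pu : p0 q != u by apply: contraNneq pF => ->.
  have pv : p0 q != v by apply: contraNneq pF => ->.
  by rewrite /cj /= ffunE (sw_id qu qv) hp // (sw_id pu pv).
move=> q qF.
have qu : q != u by apply: contraNneq qF => ->.
have qv : q != v by apply: contraNneq qF => ->.
by rewrite /cj /= ffunE (sw_id qu qv) ho.
Qed.

Lemma fl_Om2 (F : {set X}) (p0 : {ffun X -> X}) (o0 : {ffun X -> bool}) (po : U) (x : X) : x \in F -> po.1 x \in F -> po.1 x != x ->
  po \in Om2 F p0 o0 -> fl x po \in Om2 F p0 o0.
Proof.
move=> xF yF px /Om2P [hC hp ho]; apply/Om2P; split; first exact: fl_C.
  by move=> q qF; rewrite /fl /= hp.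
move=> q qF.
have qx : q == x = false by apply/negbTE; apply: contraNneq qF => ->.
have qy : q == po.1 x = false by apply/negbTE; apply: contraNneq qF => ->.
by rewrite /fl /= ffunE qx qy /= ho.
Qed.

Lemma notin_D2 (q x y : X) (F : {set X}) : q \notin F :\ x :\ y -> [\/ q = y, q = x | q \notin F].
Proof.
rewrite !inE; case: (eqVneq q y) => [->|_] /=; first by constructor 1.
by case: (eqVneq q x) => [->|_] /= h; [constructor 2 | constructor 3].
Qed.

Lemma block_eq (F : {set X}) (p0 : {ffun X -> X}) (o0 : {ffun X -> bool}) (x y : X) (b : bool) (p2 : {ffun X -> X}) (o2 : {ffun X -> bool}) :
  (p2, o2) \in Om2 F p0 o0 -> p2 x = y -> o2 x = b -> y != x ->
  [set po in [set po in Om2 F p0 o0 | po.1 x == y] | po.2 x == b] = Om2 (F :\ x :\ y) p2 o2.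
Proof.
move=> /Om2P [hC2 hp2 ho2] p2x o2x yx.
have [h21 _ h23] := cmoP _ hC2.
apply/setP => po; rewrite !inE; apply/idP/idP.
  case/andP => /andP [/Om2P [hC hp ho] /eqP px] /eqP ox.
  have [h1 _ h3] := cmoP _ hC.
  apply/Om2P; split => // q /notin_D2 [->|->|qF].
  - by rewrite -{1}px h1 -p2x h21.
  - by rewrite px p2x.
  - by rewrite hp // hp2.
  - have := h3 x; rewrite px (negbTE yx) /= => ->.
    have := h23 x; rewrite p2x (negbTE yx) /= => ->.
    by rewrite ox o2x.
  - by rewrite ox o2x.
  - by rewrite ho // ho2.
case/Om2P => hC hp ho.
have xF' : x \notin F :\ x :\ y by rewrite !inE eqxx andbF.
rewrite hp // ho // p2x o2x !eqxx !andbT; apply/Om2P; split => // q qF;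
  have qF' : q \notin F :\ x :\ y by rewrite !inE (negbTE qF) !andbF.
  by rewrite hp // hp2.
by rewrite ho // ho2.
Qed.

Lemma cjC (u v : X) po : cj u v po = cj v u po.
Proof. by rewrite /cj; congr pair; apply/ffunP => q; rewrite !ffunE !(swC u v). Qed.

Lemma cardF2 (F : {set X}) (x y : X) : x \in F -> y \in F -> y != x ->
  #|F| = (#|F :\ x :\ y|).+2.
Proof.
move=> xF yF yx; rewrite (cardsD1 x F) xF (cardsD1 y (F :\ x)).
by rewrite !inE yx yF.
Qed.

Lemma Om2_set0 (F : {set X}) p0 o0 : F = set0 -> Om2 F p0 o0 \subset [set (p0, o0)].
Proof.
move=> F0; apply/subsetP => -[p o] /Om2P [_ hp ho]; rewrite inE; apply/eqP.
by congr pair; apply/ffunP => q; [apply: hp | apply: ho]; rewrite F0 inE.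
Qed.

Lemma f_lip (po po' : U) (k : nat) : (mx po <= mx po' + k)%N -> (mx po' <= mx po + k)%N ->
  `|f po' - f po| <= k%:R * n%:R^-1.
Proof. by move=> h1 h2; rewrite !fE; apply: ratio_lip. Qed.

Lemma part2_mgf m : forall (F : {set X}) (p0 : {ffun X -> X}) (o0 : {ffun X -> bool}),
  (#|F| <= m)%N -> (forall q, q \notin F -> p0 q \notin F) ->
  (forall po, po \in Om2 F p0 o0 -> forall q, q \in F -> po.1 q != q) ->
  mgf_ok (Om2 F p0 o0) f (#|F|%:R * (5 * n%:R^-1 ^+ 2)).
Proof.
have c0 : (0 : R) <= n%:R^-1 by rewrite invr_ge0 ler0n.
have V0 : forall k : nat, (0 : R) <= k%:R * (5 * n%:R^-1 ^+ 2).
  by move=> k; rewrite mulr_ge0 // mulr_ge0 // exprn_ge0.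
have Vs : forall k : nat, (0 : R) <= k%:R * (5 * n%:R^-1 ^+ 2) + 2 * n%:R^-1 ^+ 2.
  by move=> k; rewrite addr_ge0 // mulr_ge0 // exprn_ge0.
elim: m => [|m IH] F p0 o0 hF hcl hnf.
  apply: (@mgf_small _ _ _ _ _ (p0, o0)) => //; apply: Om2_set0.
  by apply/eqP; rewrite -cards_eq0 -leqn0.
have [Oe|/set0Pn [pw pwin]] := eqVneq (Om2 F p0 o0) set0.
  by rewrite Oe; apply: (@mgf_small _ _ _ _ _ (p0, o0)) => //; exact: sub0set.
have [F0|/set0Pn [x xF]] := eqVneq F set0.
  by apply: (@mgf_small _ _ _ _ _ (p0, o0)) => //; apply: Om2_set0.
have y0F : pw.1 x \in F by apply: in_F pwin xF.
have y0x : pw.1 x != x by apply: hnf.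
have cF := cardF2 xF y0F y0x.
set N := #|F :\ x :\ pw.1 x| in cF.
have cFy : forall y, y \in F -> y != x -> #|F :\ x :\ y| = N.
  by move=> y yF yx; have := cardF2 xF yF yx; rewrite cF => -[].
rewrite cF.
have -> : (N.+2)%:R * (5 * n%:R^-1 ^+ 2) =
   (N%:R * (5 * n%:R^-1 ^+ 2) + 2 * n%:R^-1 ^+ 2) + 2 * (2 * n%:R^-1) ^+ 2 :> R.
  by rewrite -addn2 natrD; ring.
apply: (@key _ _ _ _ (fun po : U => po.1 x)).
- by rewrite mulr_ge0.
- move=> y.
  have [Be|/set0Pn [p1 p1in]] := eqVneq [set po in Om2 F p0 o0 | (fun po : U => po.1 x) po == y] set0.
    by rewrite Be; apply: (@mgf_small _ _ _ _ _ (p0, o0)) => //; exact: sub0set.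
  move: p1in; rewrite inE => /andP [p1in /eqP p1x].
  have yF : y \in F by rewrite -p1x; apply: in_F p1in xF.
  have yx : y != x by rewrite -p1x; apply: hnf.
  apply: (@key _ _ _ _ (fun po : U => po.2 x)) => //.
  + move=> b.
    have [Be|/set0Pn [[p2 o2] p2in]] := eqVneq [set po in [set po in Om2 F p0 o0 | (fun po : U => po.1 x) po == y] | (fun po : U => po.2 x) po == b] set0.
      by rewrite Be; apply: (@mgf_small _ _ _ _ _ (p0, o0)) => //; exact: sub0set.
    move: (p2in); rewrite !inE /= => /andP [/andP [p2in' /eqP p2x] /eqP o2x].
    have be := block_eq p2in' p2x o2x yx.
    rewrite /= be -(cFy y yF yx).
    move/Om2P: (p2in') => [hC2 hp2 _]; have [h21 _ _] := cmoP _ hC2.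
    apply: IH.
    * rewrite (cFy y yF yx); have h : (N.+2 <= m.+1)%N by rewrite -cF. by rewrite ltnS in h; apply: ltnW.
    * move=> q /notin_D2 [->|->|qF].
      - by rewrite -{1}p2x h21 !inE eqxx /= andbF.
      - by rewrite p2x !inE eqxx.
      - by rewrite hp2 // !inE (negbTE (hcl q qF)) !andbF.
    * move=> po; rewrite -be !inE => /andP [/andP [poin _] _] q.
      by rewrite !inE => /andP [_ /andP [_ qF]]; apply: hnf.
  + move=> b b' /set0Pn [pa pain] /set0Pn [pb pbin].
    have [<-|bb'] := eqVneq b b'; first by rewrite subrr normr0.
    apply: (@mean_invol _ _ _ _ (fl x)) => //; last first.
    * move=> po; rewrite !inE /= => /andP [/andP [poin /eqP px] _].
      have poC := Om2_C poin.
      have pxx : po.1 x != x by rewrite px.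
      apply: le_trans (@f_lip po (fl x po) 1 _ _) _; last by rewrite mul1r.
        exact: L_flip.
      have := L_flip (fl_C poC pxx) (_ : (fl x po).1 x != x); rewrite flK; apply => //.
    * exact: flK.
    * move=> po; rewrite !inE /= => /andP [/andP [poin /eqP px] /eqP ob].
      rewrite fl_Om2 //= ?px //; rewrite ffunE eqxx /= ob.
      by rewrite eqxx /=; case: (b) (b') bb' => -[].
    * move=> po; rewrite !inE /= => /andP [/andP [poin /eqP px] /eqP ob].
      rewrite fl_Om2 //= ?px //; rewrite ffunE eqxx /= ob.
      by rewrite eqxx /=; case: (b) (b') bb' => -[].
- move=> y y' /set0Pn [pa pain] /set0Pn [pb pbin].
  have [<-|yy'] := eqVneq y y'; first by rewrite subrr normr0 mulr_ge0.
  move: pain pbin; rewrite !inE /= => /andP [pain /eqP pax] /andP [pbin /eqP pbx].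
  have yF : y \in F by rewrite -pax; apply: in_F pain xF.
  have yx : y != x by rewrite -pax; apply: hnf.
  have y'F : y' \in F by rewrite -pbx; apply: in_F pbin xF.
  have y'x : y' != x by rewrite -pbx; apply: hnf.
  have xy : x != y by rewrite eq_sym.
  have xy' : x != y' by rewrite eq_sym.
  apply: (@mean_invol _ _ _ _ (cj y y')).
  * by rewrite mulr_ge0.
  * move=> po; rewrite !inE /= => /andP [poin /eqP px].
    rewrite cj_Om2 //= ffunE (sw_id xy xy') px swL eqxx.
    by [].
  * move=> po; rewrite !inE /= => /andP [poin /eqP px].
    rewrite cj_Om2 //= ffunE (sw_id xy xy') px swR eqxx.
    by [].
  * exact: cjK.
  * move=> po; rewrite !inE /= => /andP [poin /eqP px].
    have poC := Om2_C poin.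
    have po'in : cj y y' po \in Om2 F p0 o0 by apply: cj_Om2.
    have po'x : (cj y y' po).1 x = y' by rewrite ffunE (sw_id xy xy') px swL.
    apply: le_trans (@f_lip po (cj y y' po) 2 _ _) _; last by [].
      rewrite -px; apply: L_cj_pair => //; first by rewrite px.
        by rewrite px eq_sym.
      by apply: hnf.
    have := @L_cj_pair (cj y y' po) x y (Om2_C po'in).
    rewrite po'x [cj y' y _]cjC cjK; apply => //; exact: hnf.
Qed.

Lemma fixset_card (po : U) : po \in C -> #|fixset po| = odd (\sum_k d k).
Proof. by case/cmoP. Qed.

Lemma fix_single (po : U) (z : X) : po \in C -> po.1 z = z -> odd (\sum_k d k) ->
  fixset po = [set z].
Proof.
move=> hC pz od; apply/eqP; rewrite eq_sym eqEcard sub1set inE pz eqxx /=.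
by rewrite cards1 fixset_card // od.
Qed.

Lemma part2_top : mgf_ok C f (#|[set: X]|%:R * (5 * n%:R^-1 ^+ 2) + 2 * n%:R^-1 ^+ 2).
Proof.
have c0 : (0 : R) <= n%:R^-1 by rewrite invr_ge0 ler0n.
have V0 : forall k : nat, (0 : R) <= k%:R * (5 * n%:R^-1 ^+ 2).
  by move=> k; rewrite mulr_ge0 // mulr_ge0 // exprn_ge0.
have [Ce|/set0Pn [pw pwin]] := eqVneq C set0.
  by rewrite Ce => l; rewrite big_set0 cards0 mul0r.
apply: (@key _ _ _ _ fixset) => //.
- move=> Z.
  have [Be|/set0Pn [p1 p1in]] := eqVneq [set po in C | fixset po == Z] set0.
    by rewrite Be; apply: (@mgf_small _ _ _ _ _ pw) => //; exact: sub0set.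
  move: p1in; rewrite inE => /andP [p1C /eqP p1Z].
  case: (boolP (odd (\sum_k d k))) => od; last first.
    have Z0 : forall po, po \in C -> fixset po = set0.
      by move=> po poC; apply/eqP; rewrite -cards_eq0 fixset_card // (negbTE od).
    have -> : [set po in C | fixset po == Z] = Om2 setT p1.1 p1.2.
      apply/setP => po; rewrite inE; apply/andP/Om2P.
        by case=> poC _; split => // q; rewrite inE.
      by case=> poC _ _; split => //; rewrite -p1Z !Z0.
    apply: part2_mgf => //.
    + by move=> q; rewrite inE.
    + by move=> po /Om2_C poC q _; move: (Z0 po poC) => /setP /(_ q); rewrite !inE => ->.
  have [z zZ] : exists z, z \in Z.
    apply/set0Pn; rewrite -card_gt0 -p1Z fixset_card // od //.
  have pz : p1.1 z = z by move: zZ; rewrite -p1Z inE => /eqP.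
  have Zz : Z = [set z] by rewrite -p1Z; apply: fix_single.
  have hp1 := cmoP _ p1C; case: hp1 => [h11 _ h13].
  have beq : [set po in C | fixset po == Z] = Om2 (setT :\ z) p1.1 p1.2.
    apply/setP => po; rewrite inE; apply/andP/Om2P.
      case=> poC /eqP poZ.
      have ppz : po.1 z = z by apply/eqP; move/setP: (poZ) => /(_ z); rewrite Zz !inE eqxx => ->.
      have hpo := cmoP _ poC; case: hpo => [_ _ h3].
      split => // q; rewrite !inE andbT negbK => /eqP ->.
        by rewrite ppz pz.
      have := h3 z; rewrite ppz eqxx => ->.
      by have := h13 z; rewrite pz eqxx => ->.
    case=> poC hp _; split => //; apply/eqP; rewrite Zz; apply: fix_single => //.
    by rewrite hp ?pz // !inE eqxx.
  rewrite beq; apply: mgf_mono.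
    apply: part2_mgf => //.
    + by move=> q; rewrite !inE !andbT !negbK => /eqP ->; rewrite pz.
    + move=> po; rewrite -beq inE => /andP [poC /eqP poZ] q; rewrite !inE andbT => qz.
      by apply: contra qz => pq; move/setP: (poZ) => /(_ q); rewrite Zz !inE pq => <-.
  apply: ler_wpM2r; first by rewrite mulr_ge0 // exprn_ge0.
  by rewrite ler_nat subset_leq_card // subsetT.
- move=> Z Z' /set0Pn [pa pain] /set0Pn [pb pbin].
  have [<-|ZZ'] := eqVneq Z Z'; first by rewrite subrr normr0.
  move: pain pbin => /setIdP [paC /eqP paZ] /setIdP [pbC /eqP pbZ].
  case: (boolP (odd (\sum_k d k))) => od; last first.
    have e1 : Z = set0 by apply/eqP; rewrite -cards_eq0 -paZ fixset_card // (negbTE od).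
    have e2 : Z' = set0 by apply/eqP; rewrite -cards_eq0 -pbZ fixset_card // (negbTE od).
    by rewrite e1 e2 eqxx in ZZ'.
  have [z zZ] : exists z, z \in Z by apply/set0Pn; rewrite -card_gt0 -paZ fixset_card // od.
  have [z' zZ'] : exists z, z \in Z' by apply/set0Pn; rewrite -card_gt0 -pbZ fixset_card // od.
  have paz : pa.1 z = z by move: zZ; rewrite -paZ inE => /eqP.
  have pbz : pb.1 z' = z' by move: zZ'; rewrite -pbZ inE => /eqP.
  have Zz : Z = [set z] by rewrite -paZ; apply: fix_single.
  have Zz' : Z' = [set z'] by rewrite -pbZ; apply: fix_single.
  have zz' : z' != z by apply: contraNneq ZZ' => e; rewrite Zz Zz' e.
  have zz'' : z != z' by rewrite eq_sym.
  apply: (@mean_invol _ _ _ _ (cj z z')) => //.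
  * move=> po /setIdP [poC /eqP poZ]; apply/setIdP; split; first exact: cj_C.
    rewrite fix_cj poZ Zz Zz'.
    by apply/eqP/setP => q; rewrite !inE sw_eq swL.
  * move=> po /setIdP [poC /eqP poZ]; apply/setIdP; split; first exact: cj_C.
    rewrite fix_cj poZ Zz Zz'.
    by apply/eqP/setP => q; rewrite !inE sw_eq swR.
  * exact: cjK.
  * move=> po /setIdP [poC /eqP poZ].
    have ppz : po.1 z = z by apply/eqP; move/setP: (poZ) => /(_ z); rewrite Zz !inE eqxx => ->.
    have ppz' : po.1 z' != z' by apply/negP => /eqP h; move/setP: (poZ) => /(_ z'); rewrite Zz !inE h eqxx (negbTE zz').
    apply: le_trans (@f_lip po (cj z z' po) 1 _ _) _; last by rewrite mul1r.
      exact: L_cj_disc.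
    have h1 : (cj z z' po).1 z' = z' by rewrite ffunE swR ppz swL.
    have h2 : (cj z z' po).1 z != z.
      by rewrite ffunE swL sw_eq swL.
    have := @L_cj_disc (cj z z' po) z' z (cj_C _ _ poC) h1 zz'' h2.
    by rewrite cjC cjK.
Qed.

Lemma part2_final (eps : R) : 0 < eps ->
  unif_prob R C (fun po => eps < `| f po - unif_exp C f |)
     <= 2 * expR (- (eps ^+ 2 * n%:R ^+ 2) / (32 * (\sum_k (d k) ^ 2)%N%:R)).
Proof.
move=> e0.
set S := (\sum_k (d k) ^ 2)%N.
have [S0|Sn0] := eqVneq S 0%N.
  rewrite S0 mulr0 invr0 mulr0 expR0 mulr1; apply: le_trans (prob_le1 _ _ _) _; lra.
have np : (0 : R) < n%:R by rewrite ltr0n.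
have Sp : (0 : R) < S%:R by rewrite ltr0n lt0n.
have TS : (#|[set: X]| <= S)%N.
  rewrite cardsT card_tagged sumnE big_map big_enum /=.
  apply: leq_sum => i _; rewrite card_ord; nia.
have S1 : (1 <= S)%N by rewrite lt0n.
have hm' := mgf_mono part2_top (_ : _ <= S%:R * (8 * n%:R^-1 ^+ 2)).
have -> : - (eps ^+ 2 * n%:R ^+ 2) / (32 * S%:R) = - (eps ^+ 2 / (4 * (S%:R * (8 * n%:R^-1 ^+ 2)))).
  field; apply/andP; split; apply/negP => /eqP; lra.
apply: chernoff2; last exact: e0.
  apply: hm'.
  have c2 : (0 : R) <= n%:R^-1 ^+ 2 by rewrite exprn_ge0 // invr_ge0 ler0n.
  have hT : (#|[set: X]|%:R : R) <= S%:R by rewrite ler_nat.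
  have hS : (1 : R) <= S%:R by rewrite ler1n.
  set c2v := n%:R^-1 ^+ 2 in c2 *.
  set Tr := (#|[set: X]|%:R : R) in hT *.
  nra.
by rewrite mulr_gt0 // mulr_gt0 // exprn_gt0 // invr_gt0.
Qed.

End Part2.

Theorem theorem1p1 (R : realType) (n : nat) (dp dm : 'I_n -> nat) :
  (0 < n)%N ->
  ((\sum_k dm k = \sum_k dp k)%N ->
   forall eps : R, 0 < eps ->
     unif_prob R (dcm_space dp dm)
       (fun s => eps < `| @dcm_ratio R n dp dm s - unif_exp (dcm_space dp dm) (@dcm_ratio R n dp dm) |)
     <= 2 * expR (- (eps ^+ 2 * n%:R ^+ 2)
                  / (8 * (\sum_k (dp k + dm k) ^ 2)%N%:R)))
  /\
  (forall eps : R, 0 < eps ->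
     let d := fun k => (dp k + dm k)%N in
     unif_prob R (cmo_space d)
       (fun po => eps < `| @cmo_ratio R n d po - unif_exp (cmo_space d) (@cmo_ratio R n d) |)
     <= 2 * expR (- (eps ^+ 2 * n%:R ^+ 2)
                  / (32 * (\sum_k (d k) ^ 2)%N%:R))).
Proof.
move=> n0; split.
  by move=> _ eps e0; exact: (part1_final dp dm n0 e0).
by move=> eps e0; exact: (part2_final (fun k => (dp k + dm k)%N) n0 e0).
Qed.
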